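(* Let $\eta>0$ and $L>0$ be the strong monotonicity and Lipschitz constants of a mapping $F$ as in the context, let $\nu>0$, let $e_0>0$ with $\nu\ge L\sqrt{e_0/2}$, and let $\beta$ be a scalar with $0\le\beta<\frac{\eta}{L}$. Define error functions by $e_{k+1}(\delta_0,\dots,\delta_k)=(1-(\eta-\beta L)\delta_k)e_k(\delta_0,\dots,\delta_{k-1})+(1+\beta)^2\nu^2\delta_k^2$ for $k\ge0$, and let $\delta_0^*=\frac{\eta-\beta L}{2(1+\beta)^2\nu^2}e_0$, $\delta_k^*=\delta_{k-1}^*\big(1-\frac{\eta-\beta L}{2}\delta_{k-1}^*\big)$ for $k\ge1$. Then: (a) for all $k\ge0$, $e_k(\delta_0^*,\dots,\delta_{k-1}^* )=\frac{2(1+\beta)^2\nu^2}{\eta-\beta L}\delta_k^*$; (b) for any $k\ge1$, $(\delta_0^*,\dots,\delta_{k-1}^* )$ is the minimizer of $e_k$ over $\mathbb G_k\triangleq\{\alpha\in\mathbb R^k:0<\alpha_j\le\frac{\eta-\beta L}{(1+\beta)^2L^2},\ j=1,\dots,k\}$; more precisely, for any $(\delta_0,\dots,\delta_{k-1})\in\mathbb G_k$, $e_k(\delta_0,\dots,\delta_{k-1})-e_k(\delta_0^*,\dots,\delta_{k-1}^* )\ge(1+\beta)^2\nu^2(\delta_{k-1}-\delta_{k-1}^* )^2$.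
   Context: $F:X\to\mathbb R^n$ is a single-valued mapping on a nonempty closed convex set $X\subseteq\mathbb R^n$ which is Lipschitz continuous with constant $L$ ($\|F(x)-F(y)\|\le L\|x-y\|$) and strongly monotone with constant $\eta$ ($(F(x)-F(y))^T(x-y)\ge\eta\|x-y\|^2$) on $X$. *)

(* Defs.v *)
From HB Require Import structures.
From mathcomp Require Import all_boot all_order all_algebra.
From mathcomp Require Import reals.
Set Implicit Arguments. Unset Strict Implicit. Unset Printing Implicit Defensive.
Import Order.TTheory GRing.Theory Num.Theory.
Local Open Scope ring_scope.

Definition dotv {R : realType} {n : nat} (u v : 'rV[R]_n) : R :=
  \sum_(i < n) u 0 i * v 0 i.
Definition enorm {R : realType} {n : nat} (u : 'rV[R]_n) : R :=
  Num.sqrt (dotv u u).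

Definition convex_set {R : realType} {n : nat} (X : 'rV[R]_n -> Prop) : Prop :=
  forall x y t, X x -> X y -> 0 <= t -> t <= 1 -> X (t *: x + (1 - t) *: y).

Definition closed_set {R : realType} {n : nat} (X : 'rV[R]_n -> Prop) : Prop :=
  forall (u : nat -> 'rV[R]_n) (x : 'rV[R]_n),
    (forall m, X (u m)) ->
    (forall eps : R, 0 < eps -> exists N, forall m, (N <= m)%N -> enorm (u m - x) < eps) ->
    X x.

Definition lipschitz_on {R : realType} {n : nat} (X : 'rV[R]_n -> Prop)
  (F : 'rV[R]_n -> 'rV[R]_n) (L : R) : Prop :=
  forall x y, X x -> X y -> enorm (F x - F y) <= L * enorm (x - y).

Definition strongly_monotone_on {R : realType} {n : nat} (X : 'rV[R]_n -> Prop)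
  (F : 'rV[R]_n -> 'rV[R]_n) (eta : R) : Prop :=
  forall x y, X x -> X y -> dotv (F x - F y) (x - y) >= eta * (enorm (x - y)) ^+ 2.

(* e_k(delta_0,...,delta_{k-1}); only d 0, ..., d (k-1) are used. *)
Fixpoint err {R : realType} (eta beta L nu e0 : R) (d : nat -> R) (k : nat) : R :=
  match k with
  | 0 => e0
  | k'.+1 => (1 - (eta - beta * L) * d k') * err eta beta L nu e0 d k'
             + (1 + beta) ^+ 2 * nu ^+ 2 * (d k') ^+ 2
  end.

Fixpoint dstar {R : realType} (eta beta L nu e0 : R) (k : nat) : R :=
  match k with
  | 0 => (eta - beta * L) / (2 * (1 + beta) ^+ 2 * nu ^+ 2) * e0
  | k'.+1 => dstar eta beta L nu e0 k'
             * (1 - (eta - beta * L) / 2 * dstar eta beta L nu e0 k')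
  end.

Definition in_Gk {R : realType} (eta beta L : R) (k : nat) (d : nat -> R) : Prop :=
  forall j, (j < k)%N -> 0 < d j /\ d j <= (eta - beta * L) / ((1 + beta) ^+ 2 * L ^+ 2).

(* Main.v *)
Require Import Defs.
From HB Require Import structures.
From mathcomp Require Import all_boot all_order all_algebra.
From mathcomp Require Import reals ring lra.
Import Order.TTheory GRing.Theory Num.Theory.
Local Open Scope ring_scope.

Lemma dotv_ge0 (R : realType) n (u : 'rV[R]_n) : 0 <= dotv u u.
Proof. by rewrite /dotv; apply: sumr_ge0 => i _; rewrite -expr2 sqr_ge0. Qed.

Lemma enorm_sq (R : realType) n (u : 'rV[R]_n) : enorm u ^+ 2 = dotv u u.
Proof. by rewrite /enorm sqr_sqrtr // dotv_ge0. Qed.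

Lemma eta_le_L (R : realType) (n : nat) (X : 'rV[R]_n -> Prop)
  (F : 'rV[R]_n -> 'rV[R]_n) (eta L : R) :
  (exists x y, X x /\ X y /\ x <> y) -> 0 < L ->
  lipschitz_on X F L -> strongly_monotone_on X F eta -> eta <= L.
Proof.
move=> [x [y [Xx [Xy nxy]]]] L0 Hl Hm.
have Hlx := Hl x y Xx Xy. have Hmx := Hm x y Xx Xy.
set d := x - y in Hlx Hmx. set w := F x - F y in Hlx Hmx.
have dpos : 0 < dotv d d.
  rewrite lt_def dotv_ge0 andbT; apply/eqP => H0; apply: nxy.
  apply/eqP; rewrite -subr_eq0; apply/eqP; apply/matrixP => i j.
  rewrite (ord1 i).
  have Hj : d 0 j * d 0 j = 0.
    by apply: (psumr_eq0P _ H0) => // k _; rewrite -expr2 sqr_ge0.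
  have Hj0 : d 0 j = 0 by move/eqP: Hj; rewrite mulf_eq0 orbb => /eqP.
  by move: Hj0; rewrite /d !mxE.
have E : \sum_i (w 0 i - L * d 0 i) ^+ 2 = dotv w w - 2 * L * dotv w d + L ^+ 2 * dotv d d.
  rewrite /dotv !mulr_sumr -sumrB -big_split /=; apply: eq_bigr => i _; ring.
have S0 : 0 <= \sum_i (w 0 i - L * d 0 i) ^+ 2 by apply: sumr_ge0 => i _; exact: sqr_ge0.
have ww : dotv w w <= L ^+ 2 * dotv d d.
  rewrite -!enorm_sq.
  have h1 : 0 <= enorm w by rewrite /enorm sqrtr_ge0.
  have h2 : 0 <= enorm d by rewrite /enorm sqrtr_ge0.
  nra.
have wd : dotv w d <= L * dotv d d by nra.
rewrite enorm_sq in Hmx.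
have : eta * dotv d d <= L * dotv d d by apply: le_trans Hmx wd.
by rewrite ler_pM2r.
Qed.

Lemma errA (R : realType) (eta beta L nu e0 : R) :
  eta - beta * L != 0 -> 1 + beta != 0 -> nu != 0 ->
  forall k, err eta beta L nu e0 (dstar eta beta L nu e0) k
     = 2 * (1 + beta) ^+ 2 * nu ^+ 2 / (eta - beta * L) * dstar eta beta L nu e0 k.
Proof.
move=> ha hb hn; elim=> [|k IH] /=.
  by field; rewrite ha hb hn.
rewrite IH; field; by rewrite ha.
Qed.

Lemma dstar_bnd (R : realType) (eta beta L nu e0 B : R) :
  0 < eta - beta * L -> (eta - beta * L) * B <= 1 ->
  0 < dstar eta beta L nu e0 0 <= B ->
  forall k, 0 < dstar eta beta L nu e0 k <= B.
Proof.
move=> ha haB h0; elim=> [|k /andP[IH1 IH2]] //=.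
set x := dstar eta beta L nu e0 k in IH1 IH2 *.
set a := eta - beta * L in ha haB *.
have hax : a * x <= 1 by apply: le_trans haB; rewrite ler_pM2l.
apply/andP; split; nra.
Qed.


Lemma err_step (R : realType) (eta beta L nu e0 : R) :
  let a := eta - beta * L in
  let B := (eta - beta * L) / ((1 + beta) ^+ 2 * L ^+ 2) in
  let c := (1 + beta) ^+ 2 * nu ^+ 2 in
  0 < a -> a * B <= 1 ->
  (forall k, a * err eta beta L nu e0 (dstar eta beta L nu e0) k
             = 2 * c * dstar eta beta L nu e0 k) ->
  forall k d, in_Gk eta beta L k.+1 d ->
    err eta beta L nu e0 (dstar eta beta L nu e0) k <= err eta beta L nu e0 d k ->
    c * (d k - dstar eta beta L nu e0 k) ^+ 2 <=
    err eta beta L nu e0 d k.+1 - err eta beta L nu e0 (dstar eta beta L nu e0) k.+1.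
Proof.
move=> a B c ha haB hE k d hG hle /=.
have [t0 tB] := hG k (ltnSn k).
have hE' := hE k.
rewrite -/a -/c.
set E := err eta beta L nu e0 (dstar eta beta L nu e0) k in hle hE' *.
set Ed := err eta beta L nu e0 d k in hle *.
set t := d k in t0 tB *.
set x := dstar eta beta L nu e0 k in hE' *.
have hat : a * t <= 1 by apply: le_trans haB; rewrite ler_pM2l.
have hp : 0 <= (1 - a * t) * (Ed - E) by apply: mulr_ge0; rewrite subr_ge0.
have h1 : t * (a * E) = t * (2 * c * x) by rewrite hE'.
have h2 : x * (a * E) = x * (2 * c * x) by rewrite hE'.
nra.
Qed.

Lemma err_ge (R : realType) (eta beta L nu e0 : R) :
  let a := eta - beta * L in
  let B := (eta - beta * L) / ((1 + beta) ^+ 2 * L ^+ 2) in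
  let c := (1 + beta) ^+ 2 * nu ^+ 2 in
  0 < a -> a * B <= 1 -> 0 <= c ->
  (forall k, a * err eta beta L nu e0 (dstar eta beta L nu e0) k
             = 2 * c * dstar eta beta L nu e0 k) ->
  forall k d, in_Gk eta beta L k d ->
    err eta beta L nu e0 (dstar eta beta L nu e0) k <= err eta beta L nu e0 d k.
Proof.
move=> a B c ha haB hc hE; elim=> [|k IH] d hG; first by [].
have hG' : in_Gk eta beta L k d by move=> j hj; apply: hG; apply: ltnW.
have := @err_step R eta beta L nu e0 ha haB hE k d hG (IH d hG').
move=> h.
have := mulr_ge0 hc (sqr_ge0 (d k - dstar eta beta L nu e0 k)).
move: h; set u := c * _; lra.
Qed.

Theorem proposition4 (R : realType) (n : nat) (X : 'rV[R]_n -> Prop)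
  (F : 'rV[R]_n -> 'rV[R]_n) (eta L nu e0 beta : R) :
  (exists x y, X x /\ X y /\ x <> y) ->
  convex_set X -> closed_set X ->
  0 < eta -> 0 < L ->
  lipschitz_on X F L -> strongly_monotone_on X F eta ->
  0 < nu -> 0 < e0 -> L * Num.sqrt (e0 / 2) <= nu ->
  0 <= beta -> beta < eta / L ->
  (forall k : nat,
     err eta beta L nu e0 (dstar eta beta L nu e0) k
     = 2 * (1 + beta) ^+ 2 * nu ^+ 2 / (eta - beta * L) * dstar eta beta L nu e0 k)
  /\
  (forall k : nat, (1 <= k)%N ->
     in_Gk eta beta L k (dstar eta beta L nu e0) /\
     forall d : nat -> R, in_Gk eta beta L k d ->
       err eta beta L nu e0 d k - err eta beta L nu e0 (dstar eta beta L nu e0) k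
       >= (1 + beta) ^+ 2 * nu ^+ 2 * (d k.-1 - dstar eta beta L nu e0 k.-1) ^+ 2).
Proof.
move=> hX _ _ he hL hl hm hn he0 hnu hbeta hbe.
have eL : eta <= L := @eta_le_L R n X F eta L hX hL hl hm.
have ha : 0 < eta - beta * L by rewrite subr_gt0; rewrite ltr_pdivlMr // in hbe.
have hb : 0 < 1 + beta by lra.
have ha0 : eta - beta * L != 0 by rewrite gt_eqF.
have hb0 : 1 + beta != 0 by rewrite gt_eqF.
have hn0 : nu != 0 by rewrite gt_eqF.
have hL0 : L != 0 by rewrite gt_eqF.
have hc : 0 < (1 + beta) ^+ 2 * nu ^+ 2 by rewrite mulr_gt0 // exprn_gt0.
have hA := @errA R eta beta L nu e0 ha0 hb0 hn0.
have hE : forall k, (eta - beta * L) * err eta beta L nu e0 (dstar eta beta L nu e0) k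
   = 2 * ((1 + beta) ^+ 2 * nu ^+ 2) * dstar eta beta L nu e0 k.
  by move=> k; rewrite hA; field.
set B := (eta - beta * L) / ((1 + beta) ^+ 2 * L ^+ 2).
have hd : ((1 + beta) ^+ 2 * L ^+ 2) > 0 by rewrite mulr_gt0 // exprn_gt0.
have haB : (eta - beta * L) * B <= 1.
  rewrite /B mulrA ler_pdivrMr // mul1r.
  have : eta - beta * L <= (1 + beta) * L by nra.
  set a := eta - beta * L in ha *; nra.
have hsq : L ^+ 2 * (e0 / 2) <= nu ^+ 2.
  have hs : 0 <= Num.sqrt (e0 / 2) by apply: sqrtr_ge0.
  have hs2 : Num.sqrt (e0 / 2) ^+ 2 = e0 / 2 by rewrite sqr_sqrtr // divr_ge0 // ltW.
  rewrite -hs2; move: hs hnu; set s := Num.sqrt (e0 / 2) => hs hnu.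
  have hLs : 0 <= L * s by rewrite mulr_ge0 // ltW.
  have hp : 0 <= (nu - L * s) * (nu + L * s).
    by apply: mulr_ge0; lra.
  nra.
have h0 : 0 < dstar eta beta L nu e0 0 <= B.
  apply/andP; split.
    apply: mulr_gt0 => //; apply: divr_gt0 => //; by rewrite !mulr_gt0 // exprn_gt0.
  rewrite -subr_ge0.
  have -> : B - dstar eta beta L nu e0 0 =
    (eta - beta * L) * (2 * nu ^+ 2 - e0 * L ^+ 2) / (2 * (1 + beta) ^+ 2 * nu ^+ 2 * L ^+ 2).
    by rewrite /B /=; field; rewrite hb0 hn0 hL0.
  apply: divr_ge0; last by rewrite !mulr_ge0 // ?exprn_ge0 ?ltW.
  apply: mulr_ge0; first exact: ltW.
  lra.
have hbnd := @dstar_bnd R eta beta L nu e0 B ha haB h0.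
split; first exact: hA.
case=> [|k] // _; split.
  by move=> j _; have /andP[p q] := hbnd j; split.
move=> d hG /=.
have hge := @err_ge R eta beta L nu e0 ha haB (ltW hc) hE k d
   (fun j hj => hG j (ltnW hj)).
exact: (@err_step R eta beta L nu e0 ha haB hE k d hG hge).
Qed.
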